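(* If a graph $G$ is coarsely bottlenecked, then the natural map $f:G\to G_{\lambda,k}$ is a quasi-isometry for all $\lambda$ and all $k$.
   Context: All graphs are connected (and unbounded); multi-edges are allowed; $d$ is the graph metric on vertices. Sets $X,Y$ are $M$-disjoint if $d(x,y)>M$ for all $x\in X,y\in Y$; $X$ is $M$-connected if any two of its points are joined by a finite sequence in $X$ with consecutive distances $\le M$; $N_M(S)=\{y:d(s,y)<M\text{ for some }s\in S\}$. $G$ is $M$-fat $n$-bottlenecked if for any two connected $M$-disjoint subgraphs $X,Y\subset G$ there is $S\subset V(G)\setminus(V(X)\cup V(Y))$ with $|S|=n$ such that every path from a vertex of $X$ to a vertex of $Y$ meets $N_M(S)$; $G$ is coarsely bottlenecked if this holds for some $M,n\in\mathbb N$. Skeleton $G_{\lambda,k}$ (root $x_0\in V(G)$, scale $\lambda\ge1$, connectivity $k\ge1$): layers $A_{N,\lambda}=\{x: N\lambda<d(x,x_0)\le(N+1)\lambda\}$, $N\in\mathbb Z$; blocks are the maximal $k$-connected subsets of layers; $G_{\lambda,k}$ has a vertex per block and an edge between two blocks iff an edge of $G$ joins them. The natural map $f$ sends each vertex of $G$ to its block. *)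

(* Defs.v *)
From Stdlib Require Import Reals List Arith ClassicalEpsilon.

(* A graph is given by a vertex type V and a (symmetric) adjacency relation
   adj; multi-edges are irrelevant for everything below (metric, paths). *)

Inductive walk {V : Type} (adj : V -> V -> Prop) : V -> V -> nat -> Prop :=
| walk0 : forall x, walk adj x x 0
| walkS : forall x y z n, adj x y -> walk adj y z n -> walk adj x z (S n).

(* graph metric: the least length of a walk (well-defined for connected graphs) *)
Definition dist {V : Type} (adj : V -> V -> Prop) (x y : V) : nat :=
  epsilon (inhabits 0%nat)
    (fun n => walk adj x y n /\ forall m, walk adj x y m -> (n <= m)%nat).

Definition gsymmetric {V : Type} (adj : V -> V -> Prop) : Prop :=
  forall x y, adj x y -> adj y x.

Definition gconnected {V : Type} (adj : V -> V -> Prop) : Prop :=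
  forall x y, exists n, walk adj x y n.

Definition gunbounded {V : Type} (adj : V -> V -> Prop) : Prop :=
  forall n, exists x y, (n < dist adj x y)%nat.

Fixpoint adj_chain {V : Type} (adj : V -> V -> Prop) (x : V) (l : list V) : Prop :=
  match l with
  | nil => True
  | y :: l' => adj x y /\ adj_chain adj y l'
  end.

(* p = x :: l is a path starting at x and ending at last p x *)
Definition is_path {V : Type} (adj : V -> V -> Prop) (x : V) (l : list V) : Prop :=
  adj_chain adj x l.

Definition is_subgraph {V : Type} (adj : V -> V -> Prop)
  (VX : V -> Prop) (EX : V -> V -> Prop) : Prop :=
  forall x y, EX x y -> adj x y /\ VX x /\ VX y.

Definition connected_subgraph {V : Type} (adj : V -> V -> Prop)
  (VX : V -> Prop) (EX : V -> V -> Prop) : Prop :=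
  is_subgraph adj VX EX /\ (exists x, VX x) /\
  forall x y, VX x -> VX y -> exists n, walk (fun a b => EX a b \/ EX b a) x y n.

Definition M_disjoint {V : Type} (adj : V -> V -> Prop) (M : nat)
  (X Y : V -> Prop) : Prop :=
  forall x y, X x -> Y y -> (M < dist adj x y)%nat.

Definition nbhd {V : Type} (adj : V -> V -> Prop) (M : nat) (S : list V) (y : V) : Prop :=
  exists s, In s S /\ (dist adj s y < M)%nat.

Definition fat_bottlenecked {V : Type} (adj : V -> V -> Prop) (M n : nat) : Prop :=
  forall (VX : V -> Prop) (EX : V -> V -> Prop) (VY : V -> Prop) (EY : V -> V -> Prop),
    connected_subgraph adj VX EX -> connected_subgraph adj VY EY ->
    M_disjoint adj M VX VY ->
    exists S : list V,
      NoDup S /\ length S = n /\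
      (forall s, In s S -> ~ VX s /\ ~ VY s) /\
      (forall x l, VX x -> is_path adj x l -> VY (last l x) ->
         exists v, In v (x :: l) /\ nbhd adj M S v).

Definition coarsely_bottlenecked {V : Type} (adj : V -> V -> Prop) : Prop :=
  exists M n : nat, fat_bottlenecked adj M n.

Local Open Scope R_scope.

Definition layer {V : Type} (adj : V -> V -> Prop) (x0 : V) (lam : R) (N : Z)
  (x : V) : Prop :=
  IZR N * lam < INR (dist adj x x0) <= (IZR N + 1) * lam.

Inductive kchain {V : Type} (adj : V -> V -> Prop) (k : nat) (X : V -> Prop)
  : V -> V -> Prop :=
| kchain0 : forall a, X a -> kchain adj k X a a
| kchainS : forall a c b, X a -> (dist adj a c <= k)%nat -> kchain adj k X c b ->
    kchain adj k X a b.

Definition k_connected {V : Type} (adj : V -> V -> Prop) (k : nat) (X : V -> Prop) : Prop :=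
  forall a b, X a -> X b -> kchain adj k X a b.

Definition subset {V : Type} (A B : V -> Prop) : Prop := forall x, A x -> B x.

Definition is_block {V : Type} (adj : V -> V -> Prop) (x0 : V) (lam : R) (k : nat)
  (B : V -> Prop) : Prop :=
  exists N : Z,
    subset B (layer adj x0 lam N) /\ (exists x, B x) /\ k_connected adj k B /\
    (forall B' : V -> Prop, subset B' (layer adj x0 lam N) -> k_connected adj k B' ->
       subset B B' -> subset B' B).

Definition skel_vertex {V : Type} (adj : V -> V -> Prop) (x0 : V) (lam : R) (k : nat) :=
  { B : V -> Prop | is_block adj x0 lam k B }.

Definition skel_adj {V : Type} (adj : V -> V -> Prop) (x0 : V) (lam : R) (k : nat)
  (B1 B2 : skel_vertex adj x0 lam k) : Prop :=
  exists x y, proj1_sig B1 x /\ proj1_sig B2 y /\ adj x y.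

Definition quasi_isometry {A B : Type} (adjA : A -> A -> Prop) (adjB : B -> B -> Prop)
  (f : A -> B) : Prop :=
  exists K C : nat,
    (forall x y,
        (dist adjB (f x) (f y) <= K * dist adjA x y + C)%nat /\
        (dist adjA x y <= K * dist adjB (f x) (f y) + C)%nat) /\
    (forall b, exists a, (dist adjB (f a) b <= C)%nat).

(* Main.v *)
Require Import Defs.
From Stdlib Require Import Reals List Arith Lia Lra Classical ClassicalEpsilon.

Lemma walk_app {V} (adj : V -> V -> Prop) x y z n m :
  walk adj x y n -> walk adj y z m -> walk adj x z (n + m).
Proof. induction 1; intros; simpl; [auto | econstructor; eauto]. Qed.

Lemma walk_rev {V} (adj : V -> V -> Prop) : gsymmetric adj ->
  forall x y n, walk adj x y n -> walk adj y x n.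
Proof.
  intros Hs x y n H; induction H. constructor.
  replace (S n) with (n + 1) by lia. eapply walk_app; eauto.
  econstructor; [apply Hs; eauto | constructor].
Qed.

Lemma walk_split {V} (adj : V -> V -> Prop) a b : forall x z,
  walk adj x z (a + b) -> exists u, walk adj x u a /\ walk adj u z b.
Proof.
  induction a; intros x z H; simpl in H.
  - exists x; split; [constructor|auto].
  - inversion H as [|x' y' z' n' Hxy Hw]; subst.
    destruct (IHa _ _ Hw) as [u [H3 H4]]. exists u; split; auto. econstructor; eauto.
Qed.

Lemma min_exists (P : nat -> Prop) : (exists n, P n) -> exists n, P n /\ forall m, P m -> n <= m.
Proof.
  intros [n Hn]. revert Hn. induction n as [n IH] using lt_wf_ind. intros Hn.
  destruct (classic (exists m, m < n /\ P m)) as [[m [Hm HPm]]|Hno].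
  - exact (IH m Hm HPm).
  - exists n; split; auto. intros m Hm. destruct (le_lt_dec n m); auto. exfalso; apply Hno; eauto.
Qed.

Lemma gd_spec {V} (adj : V -> V -> Prop) x y : (exists n, walk adj x y n) ->
  walk adj x y (Defs.dist adj x y) /\ forall m, walk adj x y m -> Defs.dist adj x y <= m.
Proof. intros H. unfold Defs.dist. apply epsilon_spec. apply min_exists; auto. Qed.

Lemma gd_min {V} (adj : V -> V -> Prop) x y m : walk adj x y m -> Defs.dist adj x y <= m.
Proof. intros H. apply (proj2 (gd_spec adj x y (ex_intro _ m H))); auto. Qed.

Lemma gd_walk {V} (adj : V -> V -> Prop) : gconnected adj -> forall x y, walk adj x y (Defs.dist adj x y).
Proof. intros Hc x y. apply gd_spec, Hc. Qed.

Lemma gd_tri {V} (adj : V -> V -> Prop) : gconnected adj -> forall x y z,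
  Defs.dist adj x z <= Defs.dist adj x y + Defs.dist adj y z.
Proof. intros Hc x y z. apply gd_min. apply walk_app with y; apply gd_walk; auto. Qed.

Lemma gd_sym {V} (adj : V -> V -> Prop) : gconnected adj -> gsymmetric adj -> forall x y,
  Defs.dist adj x y = Defs.dist adj y x.
Proof.
  intros Hc Hs x y. apply Nat.le_antisymm; apply gd_min, walk_rev, gd_walk; auto.
Qed.

Lemma gd_refl {V} (adj : V -> V -> Prop) x : Defs.dist adj x x = 0.
Proof. pose proof (gd_min adj x x 0 (walk0 _ _)). lia. Qed.

Lemma gd_adj {V} (adj : V -> V -> Prop) x y : adj x y -> Defs.dist adj x y <= 1.
Proof. intros H. apply gd_min. econstructor; [eauto|constructor]. Qed.

Lemma last_cons {A} (l : list A) : forall (a d : A), last (a :: l) d = last l a.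
Proof.
  induction l as [|b l IH]; intros a d; auto.
  change (last (b :: l) d = last (b :: l) a). rewrite !IH. auto.
Qed.

Lemma last_app' {A} (l1 l2 : list A) : forall x, last (l1 ++ l2) x = last l2 (last l1 x).
Proof.
  induction l1 as [|a l1 IH]; intros x; auto.
  simpl app. rewrite !last_cons. auto.
Qed.

Lemma is_path_app {V} (adj : V -> V -> Prop) l1 l2 : forall x,
  is_path adj x (l1 ++ l2) <-> is_path adj x l1 /\ is_path adj (last l1 x) l2.
Proof.
  unfold is_path. induction l1 as [|a l1 IH]; intros x; simpl.
  - tauto.
  - change (adj x a /\ adj_chain adj a (l1 ++ l2) <-> (adj x a /\ adj_chain adj a l1) /\ adj_chain adj (last (a :: l1) x) l2).
    rewrite last_cons. specialize (IH a). unfold is_path in IH. rewrite IH. tauto.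
Qed.

Lemma walk_to_path {V} (adj : V -> V -> Prop) x y n : walk adj x y n ->
  exists l, is_path adj x l /\ last l x = y /\
    forall v, In v (x :: l) -> exists j, j <= n /\ walk adj x v j.
Proof.
  induction 1 as [x|x y z n Hxy Hw IH].
  - exists nil; repeat split; auto. intros v [<-|[]]. exists 0; split; [lia|constructor].
  - destruct IH as [l [Hp [Hl Hv]]]. exists (y :: l). repeat split.
    + exact Hxy.
    + exact Hp.
    + rewrite last_cons; auto.
    + intros v [<-|Hin]. exists 0; split; [lia|constructor].
      destruct (Hv v Hin) as [j [Hj Hw']]. exists (S j); split; [lia|econstructor; eauto].
Qed.

Definition indR {V} (adj : V -> V -> Prop) (P : V -> Prop) :=
  fun a b => (P a /\ P b /\ adj a b) \/ (P b /\ P a /\ adj b a).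

Lemma indR_sym {V} (adj : V -> V -> Prop) P : gsymmetric (indR adj P).
Proof. intros a b [H|H]; [right|left]; tauto. Qed.

Lemma path_walks {V} (adj : V -> V -> Prop) (P : V -> Prop) l : forall x,
  is_path adj x l -> (forall w, In w (x::l) -> P w) ->
  forall u, In u (x::l) -> exists n, walk (indR adj P) x u n.
Proof.
  induction l as [|y l IH]; intros x Hp HP u Hu.
  - destruct Hu as [<-|[]]. exists 0; constructor.
  - destruct Hu as [<-|Hu]. exists 0; constructor.
    destruct Hp as [Hxy Hp].
    destruct (IH y Hp (fun w Hw => HP w (or_intror Hw)) u Hu) as [n Hn].
    exists (S n). econstructor; [|exact Hn]. left. repeat split; auto; apply HP; simpl; auto.
Qed.

Lemma ball_walk {V} (adj : V -> V -> Prop) v z n : walk adj v z n ->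
  forall (P : V -> Prop), (forall w m, walk adj w z m -> m <= n -> P w) ->
  walk (indR adj P) v z n.
Proof.
  induction 1 as [x|x y z n Hxy Hw IH]; intros P HP.
  - constructor.
  - econstructor; [|apply IH; intros w m Hm Hle; apply (HP w m Hm); lia].
    left. split; [apply (HP x (S n)); [econstructor; eauto| lia]|].
    split; [apply (HP y n); [auto|lia]|auto].
Qed.

Lemma split_last_near {V} (Q : V -> Prop) x l : Q x ->
  exists l1 l2, l = l1 ++ l2 /\ Q (last l1 x) /\ forall w, In w l2 -> ~ Q w.
Proof.
  intros Hx. induction l as [|y l IH] using rev_ind.
  - exists nil, nil; simpl; auto.
  - destruct (classic (Q y)) as [Hy|Hy].
    + exists (l ++ y :: nil), nil. rewrite app_nil_r, last_last; simpl; auto.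
    + destruct IH as [l1 [l2 [E [H1 H2]]]]. exists l1, (l2 ++ y :: nil).
      split. rewrite E, app_assoc; auto. split; auto. intros w Hw.
      apply in_app_or in Hw. destruct Hw as [Hw|[Hw|[]]]; subst; auto.
Qed.

Definition edec {V} : forall x y : V, {x = y} + {x <> y} :=
  fun x y => excluded_middle_informative (x = y).

Lemma cover {V} (adj : V -> V -> Prop) (Hs : gsymmetric adj) (Hc : gconnected adj) (R : nat) :
  forall m (S : list V), length S <= m -> forall x l, is_path adj x l ->
  (forall w, In w (x::l) -> exists s, In s S /\ Defs.dist adj s w <= R) ->
  Defs.dist adj x (last l x) <= m * (2*R+1).
Proof.
  induction m as [|m IH]; intros S HS x l Hp Hcov.
  - destruct S; [|simpl in HS; lia]. destruct (Hcov x (or_introl eq_refl)) as [s [[] _]].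
  - destruct (Hcov x (or_introl eq_refl)) as [s [Hs_in Hsx]].
    destruct (split_last_near (fun w => Defs.dist adj s w <= R) x l Hsx) as [l1 [l2 [E [H1 H2]]]].
    subst l. rewrite last_app'. apply is_path_app in Hp. destruct Hp as [Hp1 Hp2].
    assert (Hxu : Defs.dist adj x (last l1 x) <= 2*R).
    { pose proof (gd_tri adj Hc x s (last l1 x)). rewrite (gd_sym adj Hc Hs x s) in H. lia. }
    destruct l2 as [|y l2].
    + simpl. nia.
    + destruct Hp2 as [Huy Hp2].
      set (S' := remove edec s S).
      assert (HS' : length S' <= m).
      { pose proof (remove_length_lt edec S s Hs_in). unfold S'. lia. }
      assert (IHa := IH S' HS' y l2 Hp2).
      assert (Hb : Defs.dist adj y (last l2 y) <= m * (2*R+1)).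
      { apply IHa. intros w Hw.
        destruct (Hcov w) as [s' [Hs' Hd]].
        { right. apply in_or_app. right. exact Hw. }
        exists s'. split; auto. apply in_in_remove; auto.
        intros ->. apply (H2 w Hw Hd). }
      rewrite last_cons.
      pose proof (gd_tri adj Hc x (last l1 x) (last l2 y)).
      pose proof (gd_tri adj Hc (last l1 x) y (last l2 y)).
      pose proof (gd_adj adj _ _ Huy). nia.
Qed.

Lemma kchain_path {V} (adj : V -> V -> Prop) (Hc : gconnected adj) k B x y :
  kchain adj k B x y -> exists l, is_path adj x l /\ last l x = y /\
    forall v, In v (x::l) -> exists a, B a /\ Defs.dist adj a v <= k.
Proof.
  induction 1 as [a Ha|a c b Ha Hac Hcb IH].
  - exists nil; repeat split; auto. intros v [<-|[]]. exists a; split; auto. rewrite gd_refl; lia.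
  - destruct (walk_to_path adj _ _ _ (gd_walk adj Hc a c)) as [l1 [Hp1 [Hl1 Hv1]]].
    destruct IH as [l2 [Hp2 [Hl2 Hv2]]].
    exists (l1 ++ l2). split; [|split].
    + apply is_path_app. rewrite Hl1. auto.
    + rewrite last_app', Hl1. auto.
    + intros v Hv. change (In v ((a :: l1) ++ l2)) in Hv. apply in_app_or in Hv.
      destruct Hv as [Hv|Hv].
      * destruct (Hv1 v Hv) as [j [Hj Hw]]. exists a. split; auto.
        pose proof (gd_min adj _ _ _ Hw). lia.
      * apply Hv2. right. auto.
Qed.

Lemma layer_close {V} (adj : V -> V -> Prop) x0 lam N lamN a b :
  (lam <= INR lamN)%R -> layer adj x0 lam N a -> layer adj x0 lam N b ->
  Defs.dist adj a x0 < Defs.dist adj b x0 + lamN.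
Proof.
  unfold layer. intros Hl [H1 H2] [H3 H4]. apply INR_lt. rewrite plus_INR. nra.
Qed.

Ltac fin_unf := repeat match goal with d := _ |- _ => subst d end; cbv beta in *.

Lemma block_diam {V} (adj : V -> V -> Prop) (Hs : gsymmetric adj) (Hc : gconnected adj)
  (M n : nat) (Hfb : fat_bottlenecked adj M n) x0 lam k lamN
  (HlamN : (lam <= INR lamN)%R) B :
  is_block adj x0 lam k B -> forall x y, B x -> B y ->
  Defs.dist adj x y <= n * (2 * (2*M + 2*lamN + 2*k + 1) + 1) + 3*lamN + 2*k + 2*M + 2.
Proof.
  intros [N [Hsub [_ [Hkc _]]]] x y Hx Hy.
  set (D := fun v => Defs.dist adj v x0).
  assert (Hclose : forall a b, B a -> B b -> D a < D b + lamN).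
  { intros a b Ha Hb. apply (layer_close adj x0 lam N); auto. }
  assert (Htri : forall u v w, Defs.dist adj u w <= Defs.dist adj u v + Defs.dist adj v w)
    by (intros; apply gd_tri; auto).
  assert (Hsym : forall u v, Defs.dist adj u v = Defs.dist adj v u)
    by (intros; apply gd_sym; auto).
  destruct (le_lt_dec (D x) (lamN + k + M + 1)) as [Hsmall|Hbig].
  - pose proof (Htri x x0 y). pose proof (Hsym x0 y). pose proof (Hclose y x Hy Hx).
    fin_unf; lia.
  - set (rho := D x - (lamN + k + M + 1)).
    destruct (kchain_path adj Hc k B x y (Hkc x y Hx Hy)) as [l [Hp [Hl Hv]]].
    set (VX := fun v => In v (x :: l)).
    set (VY := fun v => D v <= rho).
    assert (HDz : forall z, VX z -> rho + M + 2 <= D z /\ D z < D x + lamN + k).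
    { intros z Hz. destruct (Hv z Hz) as [a [Ha Haz]].
      pose proof (Hclose x a Hx Ha). pose proof (Hclose a x Ha Hx).
      pose proof (Htri a z x0). pose proof (Htri z a x0). pose proof (Hsym z a).
      fin_unf; lia. }
    assert (HCX : connected_subgraph adj VX (fun a b => VX a /\ VX b /\ adj a b)).
    { split; [intros a b H; tauto|]. split; [exists x; left; auto|].
      intros u v Hu Hv'.
      destruct (path_walks adj VX l x Hp (fun w Hw => Hw) u Hu) as [n1 H1].
      destruct (path_walks adj VX l x Hp (fun w Hw => Hw) v Hv') as [n2 H2].
      exists (n1 + n2). apply walk_app with x; [|exact H2].
      apply walk_rev; [apply indR_sym|exact H1]. }
    assert (HCY : connected_subgraph adj VY (fun a b => VY a /\ VY b /\ adj a b)).
    { split; [intros a b H; tauto|]. split.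
      { exists x0. unfold VY, D. rewrite gd_refl. lia. }
      assert (Hb : forall u, VY u -> walk (indR adj VY) u x0 (D u)).
      { intros u Hu. apply ball_walk; [apply gd_walk; auto|].
        intros w m Hw Hm. fin_unf; pose proof (gd_min adj _ _ _ Hw). lia. }
      intros u v Hu Hv'. exists (D u + D v). apply walk_app with x0; [apply Hb; auto|].
      apply walk_rev; [apply indR_sym|apply Hb; auto]. }
    assert (HMd : M_disjoint adj M VX VY).
    { intros z w Hz Hw. destruct (HDz z Hz) as [H1 H2]. pose proof (Htri z w x0).
      fin_unf; lia. }
    destruct (Hfb _ _ _ _ HCX HCY HMd) as [S [_ [Hlen [_ Hsep]]]].
    rewrite <- Hl.
    assert (Hcov := cover adj Hs Hc (2*M + 2*lamN + 2*k + 1) n S (Nat.eq_le_incl _ _ Hlen) x l Hp).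
    enough (Defs.dist adj x (last l x) <= n * (2 * (2*M + 2*lamN + 2*k + 1) + 1)) by lia.
    apply Hcov. intros z Hz.
    destruct (HDz z Hz) as [Hz1 Hz2].
    assert (Hsplit : walk adj z x0 ((D z - rho) + rho)).
    { replace (D z - rho + rho) with (D z) by lia. apply gd_walk; auto. }
    destruct (walk_split adj _ _ _ _ Hsplit) as [u [Hzu Hux0]].
    destruct (walk_to_path adj _ _ _ Hzu) as [lz [Hpz [Hlz Hvz]]].
    assert (HYu : VY (last lz z)).
    { rewrite Hlz. unfold VY, D. apply gd_min with (1 := Hux0). }
    destruct (Hsep z lz Hz Hpz HYu) as [v [Hvin [s [Hs_in Hsv]]]].
    exists s. split; auto.
    destruct (Hvz v Hvin) as [j [Hj Hw]].
    pose proof (gd_min adj _ _ _ Hw). pose proof (Htri s v z). pose proof (Hsym v z).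
    fin_unf; lia.
Qed.

Theorem corollary7 (V : Type) (adj : V -> V -> Prop)
  (Hsym : gsymmetric adj) (Hconn : gconnected adj) (Hunb : gunbounded adj) :
  coarsely_bottlenecked adj ->
  forall (x0 : V) (lam : R) (k : nat),
    (1 <= lam)%R -> (1 <= k)%nat ->
    forall f : V -> skel_vertex adj x0 lam k,
      (forall x, proj1_sig (f x) x) ->
      quasi_isometry adj (skel_adj adj x0 lam k) f.
Proof.
  intros [M [n Hfb]] x0 lam k Hlam Hk f Hf.
  destruct (INR_unbounded lam) as [lamN HlamN].
  set (Db := n * (2 * (2*M + 2*lamN + 2*k + 1) + 1) + 3*lamN + 2*k + 2*M + 2).
  assert (Hdiam : forall (b : skel_vertex adj x0 lam k) x y,
             proj1_sig b x -> proj1_sig b y -> Defs.dist adj x y <= Db).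
  { intros b x y Hx Hy. apply (block_diam adj Hsym Hconn M n Hfb x0 lam k lamN) with (B := proj1_sig b);
      auto; [lra | exact (proj2_sig b)]. }
  assert (Hmap : forall x y m, walk adj x y m -> walk (skel_adj adj x0 lam k) (f x) (f y) m).
  { induction 1 as [x|x y z m Hxy Hw IH]; [constructor|].
    econstructor; [|exact IH]. exists x, y. auto. }
  assert (Hback : forall b1 b2 m, walk (skel_adj adj x0 lam k) b1 b2 m ->
            forall x y, proj1_sig b1 x -> proj1_sig b2 y -> Defs.dist adj x y <= m * (2*Db+1) + Db).
  { induction 1 as [b|b1 b' b2 m Hadj Hw IH]; intros x y Hx Hy.
    - pose proof (Hdiam b x y Hx Hy). lia.
    - destruct Hadj as [p [q [Hp [Hq Hpq]]]].
      pose proof (Hdiam b1 x p Hx Hp). pose proof (IH q y Hq Hy).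
      pose proof (gd_tri adj Hconn x p y). pose proof (gd_tri adj Hconn p q y).
      pose proof (gd_adj adj p q Hpq). nia. }
  exists (2*Db+1), (Db+2). split.
  - intros x y. split.
    + pose proof (gd_min _ _ _ _ (Hmap x y _ (gd_walk adj Hconn x y))). nia.
    + assert (Hw := proj1 (gd_spec (skel_adj adj x0 lam k) (f x) (f y)
                              (ex_intro _ _ (Hmap x y _ (gd_walk adj Hconn x y))))).
      pose proof (Hback _ _ _ Hw x y (Hf x) (Hf y)). nia.
  - intros b. destruct (proj2_sig b) as [N [_ [[a Ha] _]]].
    assert (Hnb : exists a', adj a a').
    { apply NNPP. intros Hno.
      assert (Hst : forall z m, walk adj a z m -> z = a).
      { intros z m Hw. inversion Hw as [|a' y' z' m' Hay Hw']; subst; auto.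
        exfalso; apply Hno; eauto. }
      destruct (Hunb 0) as [u [v Huv]].
      destruct (Hconn a u) as [m1 H1]. destruct (Hconn a v) as [m2 H2].
      apply Hst in H1. apply Hst in H2. subst. rewrite gd_refl in Huv. lia. }
    destruct Hnb as [a' Haa'].
    exists a. apply Nat.le_trans with 2; [|lia]. apply gd_min. econstructor; [|econstructor; [|constructor]].
    + exists a, a'. split; [apply Hf|split; [apply Hf|exact Haa']].
    + exists a', a. split; [apply Hf|split; [exact Ha|apply Hsym; exact Haa']].
Qed.
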